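(* Let $f:\mathbb{R}^n\to\mathbb{R}$ be bounded, $\lambda>0$, $h>0$, and let $x_k\in h\mathbb{Z}^n$ be a grid point. Then $$M^h_\lambda(f)(x_k)=g_m(x_k)\quad\text{for every integer } m\ge\Big\lfloor\tfrac1h\sqrt{\mathrm{osc}(f)/\lambda}\Big\rfloor+1,$$ where $g_m(x_k)=\inf\{f(x_k+rh)+\lambda h^2|r|^2:\ r\in\mathbb{Z}^n,\ |r|_\infty\le m\}$.
   Context: $M^h_\lambda(f)(x_k)=\inf\{f(x_k+rh)+\lambda h^2|r|^2:\ r\in\mathbb{Z}^n\}$ is the discrete lower Moreau envelope; $\mathrm{osc}(f)=\sup f-\inf f$; $\lfloor x\rfloor$ is the integer part of $x$; $|r|$ is the Euclidean norm and $|r|_\infty=\max_i|r_i|$. *)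

(* Defs.v *)
From HB Require Import structures.
From mathcomp Require Import all_boot all_order all_algebra.
From mathcomp Require Import all_classical all_reals.
Set Implicit Arguments. Unset Strict Implicit. Unset Printing Implicit Defensive.
Import Order.TTheory GRing.Theory Num.Theory.
Local Open Scope ring_scope.
Local Open Scope classical_set_scope.

Section Defs.
Variables (R : realType) (n : nat).

Definition sqnormZ (r : 'rV[int]_n) : R := \sum_(i < n) ((r ord0 i)%:~R) ^+ 2.

Definition vecZ (r : 'rV[int]_n) : 'rV[R]_n := map_mx (fun z : int => z%:~R) r.

Definition grid_pt (h : R) (k : 'rV[int]_n) : 'rV[R]_n := h *: vecZ k.

Definition moreau_disc (h lam : R) (f : 'rV[R]_n -> R) (x : 'rV[R]_n) : R :=
  inf [set f (x + h *: vecZ r) + lam * h ^+ 2 * sqnormZ r | r in [set: 'rV[int]_n]].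

Definition g_trunc (m : nat) (h lam : R) (f : 'rV[R]_n -> R) (x : 'rV[R]_n) : R :=
  inf [set f (x + h *: vecZ r) + lam * h ^+ 2 * sqnormZ r
      | r in [set r : 'rV[int]_n | forall i, `|r ord0 i| <= m%:Z]].

Definition bounded_fun (f : 'rV[R]_n -> R) : Prop := exists M : R, forall x, `|f x| <= M.

Definition osc (f : 'rV[R]_n -> R) : R := sup (range f) - inf (range f).

End Defs.

(* Main.v *)
Require Import Defs.
From HB Require Import structures.
From mathcomp Require Import all_boot all_order all_algebra.
From mathcomp Require Import all_classical all_reals.
From mathcomp Require Import zify lra.
Import Order.TTheory GRing.Theory Num.Theory.
Local Open Scope ring_scope.

Lemma osc_bound (R : realType) (n : nat) (f : 'rV[R]_n -> R) (lam h : R) (m : nat) :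
  0 < lam -> 0 < h ->
  (Num.floor (h^-1 * Num.sqrt (osc f / lam)) + 1 <= m%:Z)%R ->
  osc f <= lam * h ^+ 2 * (m%:R) ^+ 2.
Proof.
move=> hl hh hm.
have h1 := floorD1_gt (h^-1 * Num.sqrt (osc f / lam)).
have h2 : (Num.floor (h^-1 * Num.sqrt (osc f / lam)) + 1)%:~R <= (m%:Z)%:~R :> R.
  by rewrite ler_int.
have h3 : Num.sqrt (osc f / lam) < h * m%:R.
  have := lt_le_trans h1 h2; rewrite ltr_pdivrMl // => H; exact: H.
have hs := sqrtr_ge0 (osc f / lam).
have hm0 : 0 <= h * m%:R by apply: le_trans (ltW h3).
case: (leP (osc f / lam) 0) => ho.
  have : osc f <= 0.
    by move: ho; rewrite pmulr_lle0 // invr_gt0.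
  move=> H; apply: (le_trans H); apply: mulr_ge0; last exact: sqr_ge0.
  by apply: mulr_ge0; [exact: ltW| exact: sqr_ge0].
have e : osc f = lam * (Num.sqrt (osc f / lam)) ^+ 2.
  by rewrite sqr_sqrtr ?(ltW ho) // mulrC divfK // gt_eqF.
rewrite e -mulrA -exprMn ler_pM2l //.
apply: ltW; rewrite ltr_pXn2r //=; exact: sqrtr_ge0.
Qed.

Lemma sqnormZ_ge0 (R : realType) (n : nat) (r : 'rV[int]_n) : 0 <= sqnormZ R r.
Proof. by apply: sumr_ge0 => i _; exact: sqr_ge0. Qed.

Lemma sqnormZ0 (R : realType) (n : nat) : sqnormZ R (0 : 'rV[int]_n) = 0.
Proof. by rewrite /sqnormZ big1 // => i _; rewrite mxE expr0n. Qed.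

Lemma vecZ0 (R : realType) (n : nat) : vecZ R (0 : 'rV[int]_n) = 0.
Proof. by apply/matrixP => i j; rewrite !mxE. Qed.

Lemma sqnormZ_big (R : realType) (n : nat) (r : 'rV[int]_n) (m : nat) i :
  (m%:Z < `|r ord0 i|)%R -> (m%:R) ^+ 2 <= sqnormZ R r.
Proof.
move=> hi; rewrite /sqnormZ (bigD1 i) //=.
have Hs : 0 <= \sum_(j < n | j != i) ((r ord0 j)%:~R : R) ^+ 2.
  by apply: sumr_ge0 => j _; exact: sqr_ge0.
suff : (m%:R : R) ^+ 2 <= ((r ord0 i)%:~R) ^+ 2 by move=> H; lra.
have : ((m%:Z) ^+ 2 <= (r ord0 i) ^+ 2)%R.
  by rewrite -[X in (_ <= X)%R]real_normK ?num_real // ler_pXn2r ?nnegrE ?normr_ge0 // ltW.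
rewrite -(ler_int R) !rmorphXn /=; exact.
Qed.

Theorem proposition4p8 (R : realType) (n : nat) (f : 'rV[R]_n -> R)
  (lam h : R) (k : 'rV[int]_n) :
  bounded_fun f -> 0 < lam -> 0 < h ->
  forall m : nat,
    (Num.floor (h^-1 * Num.sqrt (osc f / lam)) + 1 <= m%:Z)%R ->
    moreau_disc h lam f (grid_pt h k) = g_trunc m h lam f (grid_pt h k).
Proof.
move=> [M hM] hl hh m hm.
have hosc := @osc_bound R n f lam h m hl hh hm.
rewrite /moreau_disc /g_trunc.
set x := grid_pt h k.
set F := fun r : 'rV[int]_n => f (x + h *: vecZ R r) + lam * h ^+ 2 * sqnormZ R r.
set S := [set F r | r in [set: 'rV[int]_n]]%classic.
set T := [set F r | r in [set r : 'rV[int]_n | forall i, `|r ord0 i| <= m%:Z]]%classic.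
have Flb r : - M <= F r.
  have P : 0 <= lam * h ^+ 2 * sqnormZ R r.
    by apply: mulr_ge0; [apply: mulr_ge0; [exact: ltW|exact: sqr_ge0]| exact: sqnormZ_ge0].
  have := hM (x + h *: vecZ R r); rewrite ler_norml => /andP[Q _].
  rewrite /F; lra.
have lbS : has_lbound S by exists (- M) => y [r _ <-].
have lbT : has_lbound T by exists (- M) => y [r _ <-].
have F0 : F 0 = f x by rewrite /F vecZ0 scaler0 addr0 sqnormZ0 mulr0 addr0.
have T0 : T (f x) by exists 0 => // i; rewrite mxE normr0.
have hsup : has_sup (range f).
  split; first by exists (f 0), 0.
  by exists M => y [z _ <-]; have := hM z; rewrite ler_norml => /andP[].
have hinf : has_inf (range f).
  split; first by exists (f 0), 0.
  by exists (- M) => y [z _ <-]; have := hM z; rewrite ler_norml => /andP[].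
apply/eqP; rewrite eq_le; apply/andP; split.
  apply: lb_le_inf; first by exists (f x).
  by move=> y [r hr <-]; apply: ge_inf => //; exists r.
apply: lb_le_inf; first by exists (f x), 0.
move=> y [r _ <-].
case: (pselect (forall i, `|r ord0 i| <= m%:Z)) => hr.
  by apply: ge_inf => //; exists r.
have [i hi] : exists i, (m%:Z < `|r ord0 i|)%R.
  apply: contra_notP hr => H i; rewrite leNgt; apply/negP => Hi; apply: H; by exists i.
apply: le_trans (ge_inf lbT T0) _.
have e1 : f x <= sup (range f) by apply: sup_upper_bound => //; exists x.
have e2 : inf (range f) <= f (x + h *: vecZ R r) by apply: ge_inf => //; case: hinf.
have e3 := @sqnormZ_big R n r m i hi.
have e4 : lam * h ^+ 2 * m%:R ^+ 2 <= lam * h ^+ 2 * sqnormZ R r.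
  by rewrite ler_pM2l // mulr_gt0 // exprn_gt0.
move: hosc; rewrite /osc /F => ho; lra.
Qed.
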